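(* Let $\mathcal A$ be a weighted ODCA over $\mathbb F$ with initial configuration $c$, and let $\mathcal K=|C|\cdot|Q|$. The following are equivalent: (1) $\mathcal A$ is not regular (no finite-state weighted automaton over $\mathbb F$ recognises $f_{\mathcal A}$); (2) for every $t\in\mathbb N$ there exist configurations $d,e$ of $\mathcal A$ with $c\to^* d\to^* e$, $e=(x_e,p_e,n_e)$ with $n_e<\mathcal K$ and $x_e\notin W^{p_e,n_e}$, and $t<\mathrm{dist}(d)<\infty$; (3) there exist configurations $d=(x_d,p_d,n_d)$ and $e=(x_e,p_e,n_e)$ with $c\to^* d\to^* e$, $\mathcal K^2+\mathcal K\le n_d\le 2\mathcal K^2+\mathcal K$, $n_e<\mathcal K$ and $x_e\notin W^{p_e,n_e}$.
   Context: Fix a field $\mathbb{F}$ and a finite alphabet $\Sigma$. For $n\in\mathbb N$ let $\mathrm{sgn}(n)=0$ if $n=0$ and $1$ if $n>0$. A weighted ODCA is $\mathcal{A}=((C,\delta_0,\delta_1,p_0),(Q,\lambda,\Delta,\eta))$ where $C$ is a finite nonempty set of counter states, $\delta_0:C\times\Sigma\to C\times\{0,+1\}$ and $\delta_1:C\times\Sigma\to C\times\{-1,0,+1\}$ are deterministic counter transition functions, $p_0\in C$, $Q=\{q_1,\dots,q_{|Q|}\}$ is a finite nonempty set of states, $\lambda,\eta\in\mathbb{F}^{|Q|}$ are row vectors, and $\Delta:\Sigma\times\{0,1\}\to\mathbb{F}^{|Q|\times|Q|}$. A configuration is a triple $(x,p,n)\in\mathbb{F}^{|Q|}\times C\times\mathbb{N}$.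 Reading $a\in\Sigma$ from $(x,p,n)$ with $d=\mathrm{sgn}(n)$ and $\delta_d(p,a)=(p',e)$ leads to $(x\Delta(a,d),p',n+e)$. For each word $w$ and configuration $c=(x,p,n)$ there is a unique run on $w$ from $c$; if $M$ is the product of the matrices $\Delta(a,d)$ used along it, set $f_{\mathcal A}(w,c)=xM\eta^{T}$. The initial configuration is $(\lambda,p_0,0)$ and $f_{\mathcal A}(w)=f_{\mathcal A}(w,(\lambda,p_0,0))$. We write $c\to^* d$ if the run from $c$ on some word ends in $d$. The underlying uninitialised weighted automaton of $\mathcal A$ has state set $C\times Q$ (so $\mathcal K=|C||Q|$ states), transition matrices $\Delta'(a)$ with $\Delta'(a)[(p,q_i),(p',q_j)]=\Delta(a,1)[i][j]$ if $\delta_1(p,a)=(p',e)$ for some $e$, and $0$ otherwise, and final vector $\eta'[(p,q_i)]=\eta[i]$; for $y\in\mathbb F^{C\times Q}$ and $w=a_1\cdots a_t$ put $g(w,y)=y\Delta'(a_1)\cdots\Delta'(a_t)\eta'^T$. A configuration $c$ of $\mathcal A$ is $k$-equivalent to $y\in\mathbb F^{C\times Q}$ if $f_{\mathcal A}(w,c)=g(w,y)$ for all $w$ with $|w|\le k$. For $p\in C$, $m\in\mathbb N$, $W^{p,m}=\{x\in\mathbb F^{|Q|}:\exists y\in\mathbb F^{C\times Q},\ (x,p,m)\text{ is }\mathcal K\text{-equivalent to }y\}$. The distance $\mathrm{dist}(c)$ of a configuration $c$ is the minimal length of a word $w$ whose run from $c$ ends in some $(x,p,m)$ with $p\in C$,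 $m<\mathcal K$ and $x\notin W^{p,m}$ ($\infty$ if none exists). *)

(* Defs.v *)
From mathcomp Require Import all_boot all_order all_algebra.
Set Implicit Arguments. Unset Strict Implicit. Unset Printing Implicit Defensive.
Import GRing.Theory.
Local Open Scope ring_scope.

Inductive move := Mdec | Mstay | Minc.

Definition apply_move (m : move) (n : nat) : nat :=
  match m with Mdec => n.-1 | Mstay => n | Minc => n.+1 end.

(* A weighted ODCA over field F and alphabet S.
   Q = {q_1..q_nQ} is encoded by 'I_nQ; delta0's increment is a bool
   (false = 0, true = +1); Delta a false = Delta(a,0), Delta a true = Delta(a,1). *)
Unset Implicit Arguments.
Record wODCA (F : fieldType) (S : finType) := WODCA {
  cst : finType;
  delta0 : cst -> S -> cst * bool;
  delta1 : cst -> S -> cst * move;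
  p0 : cst;
  nQ : nat;
  lam : 'rV[F]_nQ;
  Delta : S -> bool -> 'M[F]_nQ;
  eta : 'rV[F]_nQ
}.
Arguments cst {F S}. Arguments delta0 {F S}. Arguments delta1 {F S}.
Arguments p0 {F S}. Arguments nQ {F S}. Arguments lam {F S}.
Arguments Delta {F S}. Arguments eta {F S}.
Set Implicit Arguments.

Section ODCA.
Variables (F : fieldType) (S : finType) (A : wODCA F S).

Definition config := ('rV[F]_(nQ A) * cst A * nat)%type.

Definition step (c : config) (a : S) : config :=
  let x := c.1.1 in let q := c.1.2 in let n := c.2 in
  if n == 0%N then
    ((x *m Delta A a false), (delta0 A q a).1, (n + (delta0 A q a).2)%N)
  else
    ((x *m Delta A a true), (delta1 A q a).1, apply_move (delta1 A q a).2 n).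

Definition run (c : config) (w : seq S) : config := foldl step c w.

Definition fconf (w : seq S) (c : config) : F :=
  (((run c w).1.1) *m (eta A)^T) ord0 ord0.

Definition init_config : config := (lam A, p0 A, 0%N).

Definition fA (w : seq S) : F := fconf w init_config.

Definition reach (c d : config) : Prop := exists w, run c w = d.

Definition regular : Prop :=
  exists (m : nat) (alpha : 'rV[F]_m) (mu : S -> 'M[F]_m) (beta : 'rV[F]_m),
    forall w : seq S,
      fA w = ((alpha *m foldl (fun M a => M *m mu a) 1%:M w) *m beta^T) ord0 ord0.

Definition ustate := (cst A * 'I_(nQ A))%type.

Definition Delta' (a : S) (s s' : ustate) : F :=
  if (delta1 A s.1 a).1 == s'.1 then Delta A a true s.2 s'.2 else 0.

Definition eta' (s : ustate) : F := eta A ord0 s.2.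

Definition ustep (y : {ffun ustate -> F}) (a : S) : {ffun ustate -> F} :=
  [ffun s' => \sum_(s : ustate) y s * Delta' a s s'].

Definition g (w : seq S) (y : {ffun ustate -> F}) : F :=
  \sum_(s : ustate) (foldl ustep y w) s * eta' s.

Definition bigK : nat := (#|{: cst A}| * nQ A)%N.

Definition kequiv (k : nat) (c : config) (y : {ffun ustate -> F}) : Prop :=
  forall w : seq S, (size w <= k)%N -> fconf w c = g w y.

Definition inW (p : cst A) (m : nat) (x : 'rV[F]_(nQ A)) : Prop :=
  exists y : {ffun ustate -> F}, kequiv bigK (x, p, m) y.

Definition bad (e : config) : Prop := (e.2 < bigK)%N /\ ~ inW e.1.2 e.2 e.1.1.

Definition is_dist (c : config) (k : nat) : Prop :=
  (exists w, size w = k /\ bad (run c w)) /\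
  (forall w, bad (run c w) -> (k <= size w)%N).

End ODCA.

(* Main.v *)
Require Import Defs.
From mathcomp Require Import all_boot all_order all_algebra.
From Stdlib Require Import Classical.
From mathcomp Require Import zify.
Set Implicit Arguments. Unset Strict Implicit. Unset Printing Implicit Defensive.
Import GRing.Theory.
Local Open Scope ring_scope.

Section Stab.
Variables (F : fieldType) (V : vectType F).

Definition subsp (P : V -> Prop) :=
  P 0 /\ (forall u v, P u -> P v -> P (u + v)) /\ (forall k u, P u -> P (k *: u)).

Lemma rep (P : V -> Prop) : subsp P -> exists U : {vspace V}, forall v, v \in U <-> P v.
Proof.
move=> [P0 [PD PZ]].
suff H : forall n (U : {vspace V}), (forall v, v \in U -> P v) ->
   (\dim (fullv : {vspace V}) - \dim U <= n)%N ->
   exists U' : {vspace V}, forall v, v \in U' <-> P v.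
  apply: (H _ 0%VS) => //; by move=> v; rewrite memv0 => /eqP->.
elim=> [|n IH] U sU hn.
  exists U => v; split; first exact: sU.
  move=> _; have e : \dim U = \dim (fullv : {vspace V}) by have := dimvS (subvf U); lia.
  have /eqP -> : U == fullv by rewrite -(dimv_leqif_eq (subvf U)).2 e.
  by rewrite memvf.
case: (classic (forall v, P v -> v \in U)) => [hall|].
  by exists U => v; split; [exact: sU|exact: hall].
move=> /not_all_ex_not [v hv]; have [Pv vU] := imply_to_and _ _ hv.
apply: (IH (U + <[v]>)%VS).
  move=> w /memv_addP [u uU [t /vlineP [k ->] ->]].
  by apply: PD; [exact: sU|exact: PZ].
have sub1 : (U <= U + <[v]>)%VS by exact: addvSl.
have lt : (\dim U < \dim (U + <[v]>))%N.
  rewrite ltn_neqAle (dimvS sub1) andbT (dimv_leqif_eq sub1).2.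
  apply/negP=> /eqP e.
  apply: vU.
  by rewrite e; apply: (subvP (addvSr U <[v]>)); rewrite memv_line.
have := dimvS (subvf (U + <[v]>)%VS); lia.
Qed.

Lemma stab (P : nat -> V -> Prop) :
  (forall t, subsp (P t)) ->
  (forall t v, P t.+1 v -> P t v) ->
  (forall t, (forall v, P t v -> P t.+1 v) -> forall v, P t.+1 v -> P t.+2 v) ->
  forall u t v, (\dim (fullv : {vspace V}) <= u)%N -> P u v -> P t v.
Proof.
move=> hs hdec hstep.
have decle : forall a b, (a <= b)%N -> forall v, P b v -> P a v.
  move=> a b /subnK <-; elim: (b - a)%N => [|k IH] v //= h.
  by apply: IH; apply: hdec; rewrite addSn in h.
have stabup : forall s, (forall v, P s v -> P s.+1 v) ->
    forall k v, P s v -> P (s + k)%N v.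
  move=> s h0.
  have hk : forall k, forall v, P (s + k)%N v -> P (s + k)%N.+1 v.
    elim=> [|k IH]; first by move=> v; rewrite addn0 => hh; exact: (h0 v hh).
    by rewrite addnS; apply: hstep.
  elim=> [|k IH] v h; first by rewrite addn0.
  by rewrite addnS; apply: hk; apply: IH.
set D := \dim (fullv : {vspace V}).
have claim : forall t, (exists2 s, (s <= t)%N & forall v, P s v -> P s.+1 v) \/
    (forall U : {vspace V}, (forall v, v \in U <-> P t v) -> (\dim U + t <= D)%N).
  elim=> [|t IH].
    by right=> U _; rewrite addn0; exact: dimvS (subvf U).
  case: IH => [[s st hs']|IH]; first by left; exists s => //; exact: leqW.
  case: (classic (forall v, P t v -> P t.+1 v)) => [hst|hn].
    by left; exists t.
  right=> U' hU'.
  have [U hU] := rep (hs t).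
  have sub : (U' <= U)%VS by apply/subvP=> v /hU' /hdec /hU.
  have := IH U hU.
  have : (\dim U' < \dim U)%N.
    rewrite ltn_neqAle (dimvS sub) andbT (dimv_leqif_eq sub).2.
    apply/negP=> /eqP e; apply: hn => v /hU; rewrite -e => /hU'; done.
  lia.
have [s sD hs'] : exists2 s, (s <= D)%N & forall v, P s v -> P s.+1 v.
  case: (claim D) => [//|h].
  exists D => // v Pv.
  have [U hU] := rep (hs D).
  have U0 : U = 0%VS.
    by apply/eqP; rewrite -dimv_eq0; apply/eqP; have := h U hU; lia.
  have := (proj2 (hU v) Pv); rewrite U0 memv0 => /eqP ->.
  by case: (hs D.+1).
move=> u t v Du Pu.
case: (leqP t u) => tu; first exact: (decle t u tu).
have su : (s <= u)%N by apply: leq_trans Du.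
have stu : forall v, P u v -> P u.+1 v.
  move=> w Pw; have := stabup s hs' (u - s).+1 w.
  rewrite addnS subnKC //; apply; exact: (decle s u su).
rewrite -(subnKC (ltnW tu)).
have hk : forall k w, P u w -> P (u + k)%N w.
  have hk1 : forall k, forall w, P (u + k)%N w -> P (u + k)%N.+1 w.
    elim=> [|k IH]; first by move=> w; rewrite addn0; exact: stu w.
    by rewrite addnS; apply: hstep.
  elim=> [|k IH] w h; first by rewrite addn0.
  by rewrite addnS; apply: hk1; apply: IH.
exact: hk.
Qed.

End Stab.

Section Span.
Variables (F : fieldType) (V : vectType F).

Definition spanP (G : V -> Prop) (v : V) :=
  exists s : seq V, (forall x, x \in s -> G x) /\ v \in <<s>>%VS.

Lemma spanP_sub G : subsp (spanP G).
Proof.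
split; first by exists [::]; split=> //; rewrite mem0v.
split.
  move=> u v [s1 [h1 m1]] [s2 [h2 m2]]; exists (s1 ++ s2); split.
    by move=> x; rewrite mem_cat => /orP [] ?; [apply: h1|apply: h2].
  by rewrite span_cat; apply: memv_add.
move=> k u [s [h m]]; exists s; split=> //; exact: memvZ.
Qed.

Lemma spanP_gen (G : V -> Prop) x : G x -> spanP G x.
Proof. by move=> gx; exists [:: x]; split; [move=> y; rewrite inE => /eqP -> | exact: memv_span1]. Qed.

Lemma spanP_ind (G X : V -> Prop) : subsp X -> (forall x, G x -> X x) ->
  forall v, spanP G v -> X v.
Proof.
move=> [X0 [XD XZ]] hG v [s [hs ms]].
elim: s v hs ms => [|x s IH] v hs ms.
  by move: ms; rewrite span_nil memv0 => /eqP ->.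
move: ms; rewrite span_cons => /memv_addP [u /vlineP [k ->] [t mt ->]].
apply: XD; first by apply: XZ; apply: hG; apply: hs; rewrite inE eqxx.
by apply: IH => // y ys; apply: hs; rewrite inE ys orbT.
Qed.

Lemma spanP_mono (G1 G2 : V -> Prop) : (forall x, G1 x -> G2 x) ->
  forall v, spanP G1 v -> spanP G2 v.
Proof. by move=> h v [s [hs ms]]; exists s; split=> // x /hs /h. Qed.

End Span.

Section Basic.
Variables (F : fieldType) (S : finType) (A : wODCA F S).
Local Notation C := (cst A).
Local Notation n := (nQ A).
Local Notation step := (@step F S A).
Local Notation run := (@run F S A).

Definition cstep (pn : C * nat) (a : S) : C * nat :=
  if pn.2 == 0%N then ((delta0 A pn.1 a).1, (pn.2 + (delta0 A pn.1 a).2)%N)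
  else ((delta1 A pn.1 a).1, apply_move (delta1 A pn.1 a).2 pn.2).

Definition ctrl (pn : C * nat) (w : seq S) := foldl cstep pn w.

Fixpoint mat (pn : C * nat) (w : seq S) : 'M[F]_n :=
  match w with [::] => 1%:M | a :: w' => Delta A a (pn.2 != 0%N) *m mat (cstep pn a) w' end.

Lemma step_lin x p m a : step (x, p, m) a =
  (x *m Delta A a (m != 0%N), (cstep (p, m) a).1, (cstep (p, m) a).2).
Proof. by rewrite /step /cstep /=; case: (m == 0%N). Qed.

Lemma run_lin w x p m : run (x, p, m) w =
  (x *m mat (p, m) w, (ctrl (p, m) w).1, (ctrl (p, m) w).2).
Proof.
elim: w x p m => [|a w IH] x p m /=; first by rewrite mulmx1.
rewrite /run /= step_lin -/(run _ w) IH mulmxA /ctrl /=.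
by case: (cstep (p, m) a).
Qed.

Lemma run_cat c u v : run c (u ++ v) = run (run c u) v.
Proof. exact: foldl_cat. Qed.

Lemma ctrl_cat pn u v : ctrl pn (u ++ v) = ctrl (ctrl pn u) v.
Proof. exact: foldl_cat. Qed.

Lemma mat_cat pn u v : mat pn (u ++ v) = mat pn u *m mat (ctrl pn u) v.
Proof.
elim: u pn => [|a u IH] pn /=; first by rewrite mul1mx.
by rewrite IH mulmxA.
Qed.

Lemma cstep_lb pn a : (pn.2 <= (cstep pn a).2 + 1)%N.
Proof.
rewrite /cstep; case: eqP => [->|_] //=.
by case: (delta1 A pn.1 a).2 => /=; lia.
Qed.

Lemma cstep_ub pn a : ((cstep pn a).2 <= pn.2 + 1)%N.
Proof.
rewrite /cstep; case: eqP => [->|_] //=; first by case: (delta0 A pn.1 a).2.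
by case: (delta1 A pn.1 a).2 => /=; lia.
Qed.

Lemma ctrl_lb pn w : (pn.2 <= size w + (ctrl pn w).2)%N.
Proof.
elim: w pn => [|a w IH] pn //=.
have := cstep_lb pn a; have := IH (cstep pn a); rewrite /ctrl /=; lia.
Qed.

Fixpoint rdge (k : nat) (pn : C * nat) (w : seq S) : bool :=
  match w with [::] => true | a :: w' => (k <= pn.2)%N && rdge k (cstep pn a) w' end.

Lemma shift w : forall k p m d, (1 <= k)%N ->
  (rdge (k + d) (p, m + d)%N w = rdge k (p, m) w) /\
  (rdge k (p, m) w -> mat (p, m + d)%N w = mat (p, m) w /\
     ctrl (p, m + d)%N w = ((ctrl (p, m) w).1, ((ctrl (p, m) w).2 + d)%N)).
Proof.
elim: w => [|a w IH] k p m d k1 //=.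
rewrite leq_add2r.
case: (leqP k m) => km /=; last by split.
have m0 : (m != 0%N) by rewrite -lt0n; apply: leq_trans km.
have md0 : (m + d != 0%N) by rewrite addn_eq0 negb_and m0.
have cs : cstep (p, (m + d)%N) a = ((cstep (p, m) a).1, ((cstep (p, m) a).2 + d)%N).
  rewrite /cstep /= (negbTE m0) (negbTE md0) /=.
  case: (delta1 A p a).2 => /=; congr (_, _); lia.
rewrite cs; have [IH1 IH2] := IH k (cstep (p, m) a).1 (cstep (p, m) a).2 d k1.
rewrite -surjective_pairing in IH1 IH2.
split=> // h; have [e1 e2] := IH2 h.
by rewrite m0 md0 e1; rewrite /ctrl /= -cs; rewrite /ctrl in e2; rewrite cs e2.
Qed.

Lemma rdge_mono k k' pn w : (k' <= k)%N -> rdge k pn w -> rdge k' pn w.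
Proof.
move=> kk; elim: w pn => [|a w IH] pn //= /andP [h1 h2].
by rewrite (leq_trans kk h1) IH.
Qed.

Lemma rdge_rcons k pn w a :
  rdge k pn (rcons w a) = rdge k pn w && (k <= (ctrl pn w).2)%N.
Proof.
elim: w pn => [|b w IH] pn /=; first by rewrite andbT.
by rewrite IH andbA.
Qed.

Lemma asc l u : forall pn, (pn.2 <= l <= (ctrl pn u).2)%N ->
  exists u1 u2, [/\ u = u1 ++ u2, (ctrl pn u1).2 = l & rdge l (ctrl pn u1) u2].
Proof.
elim/last_ind: u => [|u a IH] pn /andP [h1 h2].
  by exists [::], [::]; split=> //; apply/eqP; rewrite eqn_leq h1.
case: (eqVneq l (ctrl pn (rcons u a)).2) => [e|ne].
  by exists (rcons u a), [::]; split; rewrite ?cats0.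
have hl : (l <= (ctrl pn u).2)%N.
  have := cstep_ub (ctrl pn u) a.
  rewrite /ctrl -cats1 foldl_cat /= in h2 ne *; lia.
have [u1 [u2 [e1 e2 e3]]] := IH pn (introT andP (conj h1 hl)).
exists u1, (rcons u2 a); split.
- by rewrite e1 rcons_cat.
- by [].
- by rewrite rdge_rcons e3 -ctrl_cat -e1.
Qed.

Lemma desc l w : forall pn, ((ctrl pn w).2 <= l <= pn.2)%N ->
  exists v w', [/\ w = v ++ w', (ctrl pn v).2 = l & rdge l.+1 pn v].
Proof.
elim: w => [|a w IH] pn /andP [h1 h2].
  by exists [::], [::]; split=> //; rewrite /ctrl /= in h1 *; lia.
case: (eqVneq pn.2 l) => [e|ne].
  by exists [::], (a :: w); split.
have hl : (l <= (cstep pn a).2)%N by have := cstep_lb pn a; lia.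
have [v [w' [e1 e2 e3]]] := IH (cstep pn a) (introT andP (conj h1 hl)).
exists (a :: v), w'; split.
- by rewrite e1.
- by [].
- by rewrite /= e3 andbT; lia.
Qed.

End Basic.

Section A2.
Variables (F : fieldType) (S : finType) (A : wODCA F S).
Local Notation C := (cst A).
Local Notation n := (nQ A).
Local Notation step := (@step F S A).
Local Notation run := (@run F S A).
Local Notation fconf := (@fconf F S A).
Local Notation ustep := (@ustep F S A).
Local Notation g := (@g F S A).
Local Notation US := (ustate A).
Local Notation K := (bigK A).
Local Notation inW := (@inW F S A).
Local Notation bad := (@bad F S A).
Local Notation reach := (@reach F S A).

Lemma sum_pair (T1 T2 : finType) (f : T1 * T2 -> F) :
  \sum_(s : T1 * T2) f s = \sum_(a : T1) \sum_(b : T2) f (a, b).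
Proof. by rewrite pair_bigA; apply: eq_bigr => [[a b]]. Qed.

Definition emb (x : 'rV[F]_n) (p : C) : {ffun US -> F} :=
  [ffun s : US => if s.1 == p then x ord0 s.2 else 0].

Definition scl (k : F) (y : {ffun US -> F}) : {ffun US -> F} := [ffun s => k * y s].

Lemma ustepD y z a : ustep (y + z) a = ustep y a + ustep z a.
Proof.
apply/ffunP=> s'; rewrite !ffunE -big_split; apply: eq_bigr => s _.
by rewrite ffunE mulrDl.
Qed.

Lemma ustepZ k y a : ustep (scl k y) a = scl k (ustep y a).
Proof.
apply/ffunP=> s'; rewrite !ffunE mulr_sumr; apply: eq_bigr => s _.
by rewrite ffunE mulrA.
Qed.

Lemma ustep0 a : ustep 0 a = 0.
Proof. by apply/ffunP=> s'; rewrite !ffunE big1 // => s _; rewrite ffunE mul0r. Qed.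

Lemma gD w y z : g w (y + z) = g w y + g w z.
Proof.
rewrite /Defs.g -big_split /=.
suff -> : foldl ustep (y + z) w = foldl ustep y w + foldl ustep z w.
  by apply: eq_bigr => s _; rewrite ffunE mulrDl.
elim: w y z => [|a w IH] y z //=.
by rewrite ustepD IH.
Qed.

Lemma gZ w k y : g w (scl k y) = k * g w y.
Proof.
rewrite /Defs.g mulr_sumr.
suff -> : foldl ustep (scl k y) w = scl k (foldl ustep y w).
  by apply: eq_bigr => s _; rewrite ffunE mulrA.
elim: w y => [|a w IH] y //=.
by rewrite ustepZ IH.
Qed.

Lemma g0 w : g w 0 = 0.
Proof.
rewrite /Defs.g big1 // => s _.
suff -> : foldl ustep 0 w = 0 by rewrite ffunE mul0r.
by elim: w => [|a w IH] //=; rewrite ustep0.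
Qed.

Lemma ustep_emb x p a :
  ustep (emb x p) a = emb (x *m Delta A a true) (delta1 A p a).1.
Proof.
apply/ffunP=> s'; rewrite !ffunE.
rewrite sum_pair.
rewrite (bigD1 p) //= [X in _ + X]big1 ?addr0; last first.
  by move=> p1 /= hp; apply: big1 => i _; rewrite ffunE /= (negbTE hp) mul0r.
rewrite /Delta' /=.
case: eqP => [e|ne].
  rewrite e eqxx mxE; apply: eq_bigr => i _; by rewrite ffunE /= eqxx.
have -> : (s'.1 == (delta1 A p a).1) = false by apply/eqP=> e; apply: ne.
by apply: big1 => i _; rewrite mulr0.
Qed.

Lemma g_emb0 x p : g [::] (emb x p) = (x *m (eta A)^T) 0 0.
Proof.
rewrite /Defs.g /= mxE.
rewrite sum_pair.
rewrite (bigD1 p) //= [X in _ + X]big1 ?addr0; last first.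
  by move=> p1 /= hp; apply: big1 => i _; rewrite ffunE /= (negbTE hp) mul0r.
by apply: eq_bigr => i _; rewrite ffunE /= eqxx mxE.
Qed.

Lemma fconf_cons w c a : fconf (a :: w) c = fconf w (step c a).
Proof. by []. Qed.

Lemma g_cons w y a : g (a :: w) y = g w (ustep y a).
Proof. by []. Qed.

Lemma kequiv_emb w : forall x p m, (size w <= m)%N -> fconf w (x, p, m) = g w (emb x p).
Proof.
elim: w => [|a w IH] x p m hm.
  by rewrite g_emb0.
rewrite fconf_cons g_cons step_lin.
have m0 : (m != 0%N) by rewrite -lt0n; apply: leq_trans hm.
rewrite m0 ustep_emb /cstep /= (negbTE m0) /=.
apply: IH => /=; move: hm m0 => /=.
by case: (delta1 A p a).2 => /=; lia.
Qed.

Lemma fconf_lin w x p m : fconf w (x, p, m) = (x *m mat (p, m) w *m (eta A)^T) 0 0.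
Proof. by rewrite /Defs.fconf run_lin. Qed.

Lemma inW0 p m : inW p m 0.
Proof. by exists 0 => w _; rewrite fconf_lin g0 !mul0mx mxE. Qed.

Lemma inWD p m x1 x2 : inW p m x1 -> inW p m x2 -> inW p m (x1 + x2).
Proof.
move=> [y1 h1] [y2 h2]; exists (y1 + y2) => w hw.
by rewrite gD -h1 // -h2 // !fconf_lin !mulmxDl mxE.
Qed.

Lemma inWZ p m k x : inW p m x -> inW p m (k *: x).
Proof.
move=> [y h]; exists (scl k y) => w hw.
by rewrite gZ -h // !fconf_lin -!scalemxAl mxE.
Qed.

Lemma ustab (z1 z2 : {ffun US -> F}) :
  (forall v, (size v < K)%N -> g v z1 = g v z2) -> forall v, g v z1 = g v z2.
Proof.
move=> h v.
pose V := {ffun US -> F^o}.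
pose P (t : nat) (z : V) := forall v, (size v < t)%N -> g v z = 0.
have sP : forall t, subsp (P t).
  move=> t; split; first by move=> u _; apply: g0.
  split.
    move=> a b ha hb u hu; rewrite /P.
    have -> : g u (a + b) = g u a + g u b by exact: gD.
    by rewrite ha // hb // addr0.
  move=> k a ha u hu.
  have -> : (k *: a) = scl k a :> {ffun US -> F} by apply/ffunP=> s; rewrite !ffunE.
  by rewrite gZ ha // mulr0.
have dP : forall t z, P t.+1 z -> P t z by move=> t z hz u hu; apply: hz; lia.
have stP : forall t, (forall z, P t z -> P t.+1 z) -> forall z, P t.+1 z -> P t.+2 z.
  move=> t ht z hz [|a u] hu; first by apply: hz.
  rewrite g_cons; apply: (ht (ustep z a)) => //= u' hu'.
  by rewrite -g_cons; apply: hz.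
have dimV : (\dim (fullv : {vspace V}) <= K)%N.
  rewrite dimvf /dim /= /bigK card_prod card_ord.
  have -> : dim (F^o) = 1%N by [].
  by rewrite muln1.
have Pz : P K (z1 - z2 : V).
  move=> u hu.
  have -> : g u (z1 - z2) = g u z1 - g u z2.
    have -> : (z1 - z2) = z1 + scl (-1) z2 :> {ffun US -> F}.
      by apply/ffunP=> s; rewrite !ffunE mulN1r.
    by rewrite gD gZ mulN1r.
  by rewrite h // subrr.
have := @stab _ _ P sP dP stP K (size v).+1 _ dimV Pz v (ltnSn _).
have -> : g v (z1 - z2) = g v z1 - g v z2.
  have -> : (z1 - z2) = z1 + scl (-1) z2 :> {ffun US -> F}.
    by apply/ffunP=> s; rewrite !ffunE mulN1r.
  by rewrite gD gZ mulN1r.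
by move/eqP; rewrite subr_eq0 => /eqP.
Qed.

End A2.

Section A3.
Variables (F : fieldType) (S : finType) (A : wODCA F S).
Local Notation C := (cst A).
Local Notation n := (nQ A).
Local Notation step := (@step F S A).
Local Notation run := (@run F S A).
Local Notation fconf := (@fconf F S A).
Local Notation ustep := (@ustep F S A).
Local Notation g := (@g F S A).
Local Notation US := (ustate A).
Local Notation K := (bigK A).
Local Notation inW := (@inW F S A).
Local Notation bad := (@bad F S A).
Local Notation reach := (@reach F S A).
Local Notation kequiv := (@kequiv F S A).
Local Notation emb := (@emb F S A).

Lemma reach_step d c a : reach d c -> reach d (step c a).
Proof. by move=> [u <-]; exists (rcons u a); rewrite -cats1 run_cat. Qed.

Lemma reach_trans c d e : reach c d -> reach d e -> reach c e.
Proof. by move=> [u <-] [v <-]; exists (u ++ v); rewrite run_cat. Qed.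

Lemma exy d c : (forall w, ~ bad (run d w)) -> reach d c -> exists y, kequiv K c y.
Proof.
move=> nb [u <-]; move: (nb u); case: (run d u) => [[x p] m] /= nbc.
case: (leqP K m) => Km.
  by exists (emb x p) => w hw; apply: kequiv_emb; apply: leq_trans Km.
case: (classic (inW p m x)) => [[y hy]|hn]; first by exists y.
by exfalso; apply: nbc; split.
Qed.

Lemma fulleq d : (forall w, ~ bad (run d w)) ->
  forall c, reach d c -> forall y, kequiv K c y -> forall w, fconf w c = g w y.
Proof.
move=> nb.
suff H : forall N c, reach d c -> forall y, kequiv K c y ->
    forall w, (size w <= N)%N -> fconf w c = g w y.
  by move=> c rc y hy w; apply: (H (size w)).
elim=> [|N IH] c rc y hy w hw.
  by apply: hy; apply: leq_trans hw _.
case: (leqP (size w) K) => hK; first by apply: hy.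
case: w hw hK => [//|a w] hw hK.
have rc' := reach_step a rc.
have [y' hy'] := exy nb rc'.
rewrite fconf_cons (IH _ rc' _ hy') //.
rewrite g_cons; apply: ustab => v hv.
rewrite -hy'; last by apply: ltnW.
by rewrite -fconf_cons hy.
Qed.

Lemma fulleq_emb x p m : (K <= m)%N -> (forall w, ~ bad (run (x, p, m) w)) ->
  forall w, fconf w (x, p, m) = g w (emb x p).
Proof.
move=> Km nb w; apply: (fulleq nb) => //; first by exists [::].
by move=> v hv; apply: kequiv_emb; apply: leq_trans Km.
Qed.

End A3.

Section A4.
Variables (F : fieldType) (S : finType) (A : wODCA F S).
Local Notation C := (cst A).
Local Notation n := (nQ A).
Local Notation step := (@step F S A).
Local Notation run := (@run F S A).
Local Notation fconf := (@fconf F S A).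
Local Notation ustep := (@ustep F S A).
Local Notation g := (@g F S A).
Local Notation US := (ustate A).
Local Notation K := (bigK A).
Local Notation inW := (@inW F S A).
Local Notation bad := (@bad F S A).
Local Notation reach := (@reach F S A).
Local Notation kequiv := (@kequiv F S A).
Local Notation emb := (@emb F S A).
Local Notation fA := (@fA F S A).

Definition ffstep (St : finType) (mu : S -> St -> St -> F) (v : {ffun St -> F}) (a : S) :
  {ffun St -> F} := [ffun s' => \sum_s v s * mu a s s'].

Lemma regular_of_fin (St : finType) (al : {ffun St -> F}) (mu : S -> St -> St -> F)
  (be : St -> F) :
  (forall w, fA w = \sum_s (foldl (ffstep mu) al w) s * be s) -> regular A.
Proof.
move=> H.
exists #|St|, (\row_i al (enum_val i)), (fun a => \matrix_(i, j) mu a (enum_val i) (enum_val j)),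
  (\row_i be (enum_val i)).
have cl : forall w, \row_i al (enum_val i) *m
    foldl (fun (M : 'M[F]_#|St|) a => M *m \matrix_(i, j) mu a (enum_val i) (enum_val j)) 1%:M w =
    \row_i (foldl (ffstep mu) al w) (enum_val i).
  move=> w; elim/last_ind: w => [|w a IH]; first by rewrite /= mulmx1.
  rewrite !foldl_rcons mulmxA IH; apply/rowP=> j; rewrite !mxE ffunE.
  rewrite (big_enum_val (A := St) (fun s => foldl (ffstep mu) al w s * mu a s (enum_val j))).
  by apply: eq_bigr => i _; rewrite !mxE.
move=> w; rewrite H cl mxE.
rewrite (big_enum_val (A := St) (fun s => foldl (ffstep mu) al w s * be s)).
by apply: eq_bigr => i _; rewrite !mxE.
Qed.

End A4.

Section A5.
Variables (F : fieldType) (S : finType) (A : wODCA F S).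
Local Notation C := (cst A).
Local Notation n := (nQ A).
Local Notation step := (@step F S A).
Local Notation run := (@run F S A).
Local Notation fconf := (@fconf F S A).
Local Notation ustep := (@ustep F S A).
Local Notation g := (@g F S A).
Local Notation US := (ustate A).
Local Notation K := (bigK A).
Local Notation inW := (@inW F S A).
Local Notation bad := (@bad F S A).
Local Notation reach := (@reach F S A).
Local Notation kequiv := (@kequiv F S A).
Local Notation emb := (@emb F S A).
Local Notation fA := (@fA F S A).

Variable T : nat.
Local Notation St := ((C * 'I_T.+1) * 'I_n)%type.

Definition mu (a : S) (s s' : St) : F :=
  if (val s.1.2 < T)%N then
    (if cstep (s.1.1, val s.1.2) a == (s'.1.1, val s'.1.2)
     then Delta A a (val s.1.2 != 0%N) s.2 s'.2 else 0)
  else (if (val s'.1.2 == T) && ((delta1 A s.1.1 a).1 == s'.1.1)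
        then Delta A a true s.2 s'.2 else 0).

Definition vec (c : config A) : {ffun St -> F} :=
  [ffun s : St => if (s.1.1 == c.1.2) && (val s.1.2 == c.2) then c.1.1 ord0 s.2 else 0].

Definition vecU (y : {ffun US -> F}) : {ffun St -> F} :=
  [ffun s : St => if val s.1.2 == T then y (s.1.1, s.2) else 0].

Definition be (s : St) : F := eta A ord0 s.2.

Lemma sum_St (f : St -> F) :
  \sum_(s : St) f s = \sum_(p : C) \sum_(l : 'I_T.+1) \sum_(i : 'I_n) f ((p, l), i).
Proof. by rewrite sum_pair sum_pair. Qed.

Lemma L1 x p m a : (m < T)%N -> ffstep mu (vec (x, p, m)) a = vec (step (x, p, m) a).
Proof.
move=> mT; apply/ffunP=> s'; rewrite !ffunE sum_pair.
have mT1 : (m < T.+1)%N by apply: ltnW.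
rewrite (bigD1 (p, inord m)) //= [X in _ + X]big1 ?addr0; last first.
  move=> [p1 l] /= hpl; apply: big1 => i _; rewrite ffunE /=.
  case: andP => [[/eqP e1 /eqP e2]|_]; last by rewrite mul0r.
  by exfalso; move: hpl; rewrite e1 -e2 inord_val eqxx.
rewrite step_lin /=.
under eq_bigr => i _ do rewrite ffunE /= eqxx inordK // eqxx /= /mu /= inordK // mT.
case: (cstep (p, m) a) => [p' m'] /=.
rewrite xpair_eqE [p' == _]eq_sym [m' == _]eq_sym.
case: ifP => _; last by rewrite big1 // => i _; rewrite mulr0.
by rewrite mxE.
Qed.

Lemma L2 y a : ffstep mu (vecU y) a = vecU (ustep y a).
Proof.
apply/ffunP=> s'; rewrite !ffunE sum_St.
have E : forall p, \sum_(l : 'I_T.+1) \sum_(i : 'I_n) vecU y ((p, l), i) * mu a ((p, l), i) s'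
   = \sum_(i : 'I_n) y (p, i) * mu a ((p, ord_max), i) s'.
  move=> p; rewrite (bigD1 ord_max) //= [X in _ + X]big1 ?addr0; last first.
    move=> l hl; apply: big1 => i _; rewrite ffunE /=.
    case: eqP => [e|_]; last by rewrite mul0r.
    exfalso; have el : l = ord_max by apply: val_inj; rewrite /= e.
    by rewrite el eqxx in hl.
  by apply: eq_bigr => i _; rewrite ffunE /= eqxx.
under eq_bigr => p _ do rewrite E.
rewrite /mu /= ltnn.
case: eqP => [e|ne] /=; last first.
  by apply: big1 => p _; apply: big1 => i _; rewrite mulr0.
rewrite sum_pair; apply: eq_bigr => p _; apply: eq_bigr => i _.
by rewrite /Delta' /=; case: (_ == _).
Qed.

Lemma L3 x p : vec (x, p, T) = vecU (emb x p).
Proof.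
apply/ffunP=> s; rewrite !ffunE /=.
by case: (val s.1.2 == T); rewrite ?andbT ?andbF.
Qed.

Lemma out1 x p m : (m <= T)%N -> \sum_s vec (x, p, m) s * be s = fconf [::] (x, p, m).
Proof.
move=> mT; rewrite sum_St (bigD1 p) //= [X in _ + X]big1 ?addr0; last first.
  move=> p1 hp; apply: big1 => l _; apply: big1 => i _.
  by rewrite ffunE /= (negbTE hp) mul0r.
rewrite (bigD1 (inord m)) //= [X in _ + X]big1 ?addr0; last first.
  move=> l hl; apply: big1 => i _; rewrite ffunE /= eqxx /=.
  case: eqP => [e|_]; last by rewrite mul0r.
  by exfalso; move: hl; rewrite -e inord_val eqxx.
rewrite /Defs.fconf /= mxE; apply: eq_bigr => i _.
by rewrite ffunE /= eqxx inordK ?ltnS // eqxx /be mxE.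
Qed.

Lemma out2 y : \sum_s vecU y s * be s = g [::] y.
Proof.
rewrite sum_St /Defs.g /= sum_pair; apply: eq_bigr => p _.
rewrite (bigD1 ord_max) //= [X in _ + X]big1 ?addr0; last first.
  move=> l hl; apply: big1 => i _; rewrite ffunE /=.
  case: eqP => [e|_]; last by rewrite mul0r.
  exfalso; have el : l = ord_max by apply: val_inj; rewrite /= e.
    by rewrite el eqxx in hl.
by apply: eq_bigr => i _; rewrite ffunE /= eqxx.
Qed.

Hypothesis KT : (K <= T)%N.
Hypothesis T1 : (0 < T)%N.
Hypothesis H : forall d, reach (init_config A) d -> d.2 = T -> forall w, ~ bad (run d w).

Lemma construct : regular A.
Proof.
apply: (@regular_of_fin _ _ A St (vec (init_config A)) mu be).
have inv : forall w,
  ((run (init_config A) w).2 < T /\ foldl (ffstep mu) (vec (init_config A)) w = vec (run (init_config A) w))%N \/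
  (exists u u', [/\ w = u ++ u', (run (init_config A) u).2 = T &
     foldl (ffstep mu) (vec (init_config A)) w =
     vecU (foldl ustep (emb (run (init_config A) u).1.1 (run (init_config A) u).1.2) u')]).
  move=> w; elim/last_ind: w => [|w a IH].
    by left.
  rewrite foldl_rcons -cats1 run_cat /=.
  case: IH => [[hl ->]|[u [u' [e1 e2 e3]]]].
    move: hl; case E: (run (init_config A) w) => [[x p] m] /= hl.
    rewrite L1 //.
    have ub := cstep_ub (p, m) a.
    case: (ltnP (step (x, p, m) a).2 T) => h2; first by left.
    right; exists (rcons w a), [::]; split; first by rewrite cats0 cats1.
      rewrite -cats1 run_cat E /=; move: h2 ub; rewrite step_lin /=; lia.
    rewrite -cats1 run_cat E /=.
    have e2 : (step (x, p, m) a).2 = T by move: h2 ub; rewrite step_lin /=; lia.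
    by move: e2; case: (step (x, p, m) a) => [[x' p'] m'] /= ->; rewrite L3.
  right; exists u, (rcons u' a); split.
  - by rewrite e1 -cats1 catA.
  - by [].
  - by rewrite e3 L2 foldl_rcons.
move=> w; case: (inv w) => [[hl ->]|[u [u' [e1 e2 e3]]]].
  rewrite /Defs.fA /Defs.fconf.
  move: hl; case: (run (init_config A) w) => [[x p] m] /= hl.
  by rewrite out1 //; apply: ltnW.
rewrite e3 out2.
have gg : forall y v, g [::] (foldl ustep y v) = g v y by [].
rewrite gg.
have hd : run (init_config A) u = ((run (init_config A) u).1.1, (run (init_config A) u).1.2, T).
  by rewrite -e2; case: (run _ u) => [[? ?] ?].
have nb : forall w0, ~ bad (run ((run (init_config A) u).1.1, (run (init_config A) u).1.2, T) w0).
  by rewrite -hd; apply: H => //; exists u.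
rewrite -(fulleq_emb KT nb) -hd.
by rewrite e1 /Defs.fA /Defs.fconf run_cat.
Qed.

End A5.

Section A6.
Variables (F : fieldType) (S : finType) (A : wODCA F S).
Local Notation C := (cst A).
Local Notation n := (nQ A).
Local Notation step := (@step F S A).
Local Notation run := (@run F S A).
Local Notation fconf := (@fconf F S A).
Local Notation ustep := (@ustep F S A).
Local Notation g := (@g F S A).
Local Notation US := (ustate A).
Local Notation K := (bigK A).
Local Notation inW := (@inW F S A).
Local Notation bad := (@bad F S A).
Local Notation reach := (@reach F S A).
Local Notation kequiv := (@kequiv F S A).
Local Notation emb := (@emb F S A).
Local Notation fA := (@fA F S A).
Local Notation is_dist := (@is_dist F S A).

Lemma reg_nodist : regular A -> ~ (forall t : nat, exists d e : config A,
      reach (init_config A) d /\ reach d e /\ (e.2 < K)%N /\ ~ inW e.1.2 e.2 e.1.1 /\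
      exists k : nat, is_dist d k /\ (t < k)%N).
Proof.
move=> [m [alpha [mu [beta hf]]]] h2.
pose Mf (w : seq S) := foldl (fun (M : 'M[F]_m) a => M *m mu a) 1%:M w.
have fM : forall v M, foldl (fun (M : 'M[F]_m) a => M *m mu a) M v = M *m Mf v.
  elim=> [|a v IH] M /=; first by rewrite mulmx1.
  by rewrite /Mf /= IH [in RHS]IH mul1mx mulmxA.
have Mcat : forall u v, Mf (u ++ v) = Mf u *m Mf v.
  by move=> u v; rewrite /Mf foldl_cat fM.
pose h (z : 'rV[F]_m) v := ((z *m Mf v) *m beta^T) 0 0.
have hrun : forall u v, fconf v (run (init_config A) u) = h (alpha *m Mf u) v.
  move=> u v; rewrite /h -[alpha *m Mf u *m Mf v]mulmxA -Mcat -hf.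
  by rewrite /Defs.fA /Defs.fconf run_cat.
pose Gd (z : 'rV[F]_m) := exists y, forall v, (size v <= K)%N -> h z v = g v y.
have nbGd : forall u, ~ bad (run (init_config A) u) -> Gd (alpha *m Mf u).
  move=> u nb.
  case: (leqP K (run (init_config A) u).2) => Ku.
    exists (emb (run (init_config A) u).1.1 (run (init_config A) u).1.2) => v hv.
    rewrite -hrun.
    move: Ku hv; case: (run _ u) => [[x p] q] /= Ku hv.
    by apply: kequiv_emb; apply: leq_trans Ku.
  case: (classic (inW (run (init_config A) u).1.2 (run (init_config A) u).2 (run (init_config A) u).1.1)) => [[y hy]|hn].
    exists y => v hv; rewrite -hrun -hy //.
    by case: (run _ u) => [[? ?] ?].
  by exfalso; apply: nb; split.
have Gdnb : forall u, Gd (alpha *m Mf u) -> ~ bad (run (init_config A) u).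
  move=> u [y hy] [_ []]; exists y => v hv; rewrite -hy // -hrun.
  by case: (run _ u) => [[? ?] ?].
pose P (t : nat) (z : 'rV[F]_m) := forall w, (size w < t)%N -> Gd (z *m Mf w).
have hD : forall z1 z2 v, h (z1 + z2) v = h z1 v + h z2 v.
  by move=> z1 z2 v; rewrite /h !mulmxDl mxE.
have hZ : forall k z v, h (k *: z) v = k * h z v.
  by move=> k z v; rewrite /h -!scalemxAl mxE.
have sP : forall t, subsp (P t).
  move=> t; split.
    move=> w _; exists 0 => v _; by rewrite g0 /h !mul0mx mxE.
  split.
    move=> z1 z2 hz1 hz2 w hw.
    have [y1 e1] := hz1 w hw; have [y2 e2] := hz2 w hw.
    exists (y1 + y2) => v hv; rewrite mulmxDl hD e1 // e2 //.
    by rewrite gD.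
  move=> k z hz w hw; have [y e] := hz w hw.
  exists (scl k y) => v hv; by rewrite -scalemxAl hZ e // gZ.
have dP : forall t z, P t.+1 z -> P t z by move=> t z hz w hw; apply: hz; lia.
have stP : forall t, (forall z, P t z -> P t.+1 z) -> forall z, P t.+1 z -> P t.+2 z.
  move=> t ht z hz [|a w] hw; first by apply: hz.
  have -> : z *m Mf (a :: w) = (z *m mu a) *m Mf w.
    by rewrite -cat1s Mcat mulmxA /Mf /= mul1mx.
  apply: (ht (z *m mu a)) => //= w' hw'.
  have := hz (a :: w') hw'.
  by rewrite -cat1s Mcat mulmxA /Mf /= mul1mx.
have dimV : (\dim (fullv : {vspace 'rV[F]_m}) <= m)%N by rewrite dimvf dim_matrix; lia.
have [d [e [[u ru] [_ [_ [_ [k [[[w0 [sw0 bw0]] kmin] mk]]]]]]]] := h2 m.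
have Pz : P m (alpha *m Mf u).
  move=> w hw.
  rewrite -mulmxA -Mcat; apply: nbGd.
  rewrite run_cat ru => bw.
  have := kmin w bw; lia.
have := @stab _ _ P sP dP stP m k.+1 _ dimV Pz w0.
rewrite sw0 => /(_ (ltnSn _)).
rewrite -mulmxA -Mcat => /Gdnb.
by rewrite run_cat ru.
Qed.

End A6.

Section A7.
Variables (F : fieldType) (S : finType) (A : wODCA F S).
Local Notation C := (cst A).
Local Notation n := (nQ A).
Local Notation step := (@step F S A).
Local Notation run := (@run F S A).
Local Notation fconf := (@fconf F S A).
Local Notation ustep := (@ustep F S A).
Local Notation g := (@g F S A).
Local Notation US := (ustate A).
Local Notation K := (bigK A).
Local Notation inW := (@inW F S A).
Local Notation bad := (@bad F S A).
Local Notation reach := (@reach F S A).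
Local Notation kequiv := (@kequiv F S A).
Local Notation emb := (@emb F S A).
Local Notation fA := (@fA F S A).
Local Notation is_dist := (@is_dist F S A).
Local Notation ctrl := (@ctrl F S A).
Local Notation mat := (@mat F S A).
Local Notation rdge := (@rdge F S A).

Lemma shift_up k p m l w : (1 <= k)%N -> (m <= l)%N -> rdge k (p, m) w ->
  mat (p, l) w = mat (p, m) w /\ ctrl (p, l) w = ((ctrl (p, m) w).1, ((ctrl (p, m) w).2 + (l - m))%N).
Proof.
move=> k1 ml h; have [_ H] := shift w p m (l - m) k1.
by rewrite subnKC in H => //; apply: H.
Qed.

Lemma shift_down k p m l w : (1 <= k)%N -> (m <= l)%N -> rdge (k + (l - m)) (p, l) w ->
  rdge k (p, m) w.
Proof.
move=> k1 ml h; have [H _] := shift w p m (l - m) k1.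
by rewrite subnKC in H => //; rewrite -H.
Qed.

Local Notation V := {ffun (C * C) -> 'M[F]_n}.

Definition gen (l : nat) (Y : V) := exists (x : 'rV[F]_n) (p1 p2 : C) (w : seq S) (chi : 'cV[F]_n),
  [/\ reach (init_config A) (x, p1, l), ((ctrl (p2, l) w).2 < K)%N,
   (forall x', inW (ctrl (p2, l) w).1 (ctrl (p2, l) w).2 x' -> (x' *m chi) 0 0 = 0) &
   Y = [ffun q => if q == (p1, p2) then x^T *m (mat (p2, l) w *m chi)^T else 0]].

Definition Lmap (p p1 p2 p' : C) (Mu Mv : 'M[F]_n) (Y : V) : V :=
  [ffun q => if q == (p1, p2) then Mu^T *m Y (p, p') *m Mv^T else 0].

Definition inL (p p1 p2 p' : C) (Mu Mv : 'M[F]_n) := exists u v,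
  [/\ rdge 1 (p, 1%N) u, ctrl (p, 1%N) u = (p1, 2%N) & mat (p, 1%N) u = Mu] /\
  [/\ rdge 1 (p2, 2%N) v, ctrl (p2, 2%N) v = (p', 1%N) & mat (p2, 2%N) v = Mv].

Lemma decomp l Y : (K <= l)%N -> (1 <= l)%N -> gen l.+1 Y ->
  exists p p1 p2 p' Mu Mv Y', [/\ inL p p1 p2 p' Mu Mv, gen l Y' & Y = Lmap p p1 p2 p' Mu Mv Y'].
Proof.
move=> Kl l1 [x [p1 [p2 [w [chi [[u ru] wK wchi ->]]]]]].
move: ru; rewrite /init_config run_lin => [[ex ec1 ec2]].
have ec : ctrl (p0 A, 0%N) u = (p1, l.+1) by rewrite -ec1 -ec2 -surjective_pairing.
have hu : ((p0 A, 0%N).2 <= l <= (ctrl (p0 A, 0%N) u).2)%N by rewrite ec /=; lia.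
have [u1 [u2 [eu cu1 ru2]]] := asc hu.
set q := ctrl (p0 A, 0%N) u1 in cu1 ru2.
have qe : q = (q.1, l) by rewrite -cu1 -surjective_pairing.
rewrite qe in ru2.
have r1 : rdge 1 (q.1, 1%N) u2 by apply: (shift_down (l := l)) => //; rewrite subnKC.
have [em ec'] := shift_up (k := 1) (l := l) isT l1 r1.
have cq : ctrl (q.1, l) u2 = (p1, l.+1) by rewrite -qe -ctrl_cat -eu.
rewrite cq in ec'.
have c2 : ctrl (q.1, 1%N) u2 = (p1, 2%N).
  move: ec'; case: (ctrl (q.1, 1%N) u2) => [a b] /= [-> e]; congr (_, _); lia.
have hd : ((ctrl (p2, l.+1) w).2 <= l <= (p2, l.+1).2)%N by rewrite /=; apply/andP; split; lia.
have [v [w' [ew cv rv]]] := desc hd.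
set p' := (ctrl (p2, l.+1) v).1.
have rv1 : rdge 1 (p2, 2%N) v.
  apply: (shift_down (k := 1) (m := 2) (l := l.+1)) => //; try lia.
  by apply: (rdge_mono (k := l.+1)) rv; lia.
have h2l : (2 <= l.+1)%N by lia.
have [emv ecv] := shift_up (k := 1) (l := l.+1) isT h2l rv1.
have cv2 : ctrl (p2, 2%N) v = (p', 1%N).
  move: ecv; rewrite /p'; case: (ctrl (p2, 2%N) v) => [a b] /= e.
  rewrite e /=; congr (_, _); move: cv; rewrite e /=; lia.
have cpv : ctrl (p2, l.+1) v = (p', l) by rewrite [LHS]surjective_pairing cv.
exists q.1, p1, p2, p', (mat (q.1, 1%N) u2), (mat (p2, 2%N) v).
exists [ffun r => if r == (q.1, p') then (lam A *m mat (p0 A, 0%N) u1)^T *m (mat (p', l) w' *m chi)^T else 0].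
split.
- by exists u2, v; split; split.
- exists (lam A *m mat (p0 A, 0%N) u1), q.1, p', w', chi; split.
  + exists u1; rewrite /init_config run_lin qe -/q; congr (_, _, _).
    by rewrite cu1.
  + by rewrite -cpv -ctrl_cat -ew.
  + by rewrite -cpv -ctrl_cat -ew.
  + by [].
- apply/ffunP=> r; rewrite !ffunE; case: eqP => // _.
  rewrite eqxx -ex eu mat_cat -/q qe -em ew mat_cat cpv -emv.
  by rewrite !trmx_mul !mulmxA.
Qed.

Lemma comp l Y p p1 p2 p' Mu Mv : (1 <= l)%N -> gen l Y -> inL p p1 p2 p' Mu Mv ->
  Lmap p p1 p2 p' Mu Mv Y = 0 \/ gen l.+1 (Lmap p p1 p2 p' Mu Mv Y).
Proof.
move=> l1 [x [q1 [q2 [w [chi [rx wK wchi ->]]]]]] [u [v [[ru cu mu] [rv cv mv]]]].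
case: (eqVneq (p, p') (q1, q2)) => [e|ne]; last first.
  left; apply/ffunP=> r; rewrite !ffunE (negbTE ne) mulmx0 mul0mx.
  by case: (_ == _).
right; case: e => ep ep'; subst p p'.
have [emu ecu] := shift_up (k := 1) (l := l) isT l1 ru.
have h2l : (2 <= l.+1)%N by lia.
have [emv ecv] := shift_up (k := 1) (l := l.+1) isT h2l rv.
rewrite cu /= in ecu; rewrite cv /= in ecv.
have e1 : (1 + (l - 1))%N = l by lia.
have e2 : (2 + (l - 1))%N = l.+1 by lia.
have e3 : (1 + (l.+1 - 2))%N = l by lia.
rewrite e2 in ecu; rewrite e3 in ecv.
exists (x *m Mu), p1, p2, (v ++ w), chi; split.
- case: rx => u0 ru0; exists (u0 ++ u).
  by rewrite run_cat ru0 run_lin emu mu ecu.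
- by rewrite ctrl_cat ecv.
- by rewrite ctrl_cat ecv.
- apply/ffunP=> r; rewrite !ffunE; case: eqP => // _.
  rewrite eqxx mat_cat emv mv ecv.
  by rewrite !trmx_mul !mulmxA.
Qed.

Lemma LmapD p p1 p2 p' Mu Mv Y1 Y2 :
  Lmap p p1 p2 p' Mu Mv (Y1 + Y2) = Lmap p p1 p2 p' Mu Mv Y1 + Lmap p p1 p2 p' Mu Mv Y2.
Proof.
apply/ffunP=> r; rewrite !ffunE; case: (_ == _); last by rewrite addr0.
by rewrite mulmxDr mulmxDl.
Qed.

Lemma LmapZ p p1 p2 p' Mu Mv k Y :
  Lmap p p1 p2 p' Mu Mv (k *: Y) = k *: Lmap p p1 p2 p' Mu Mv Y.
Proof.
apply/ffunP=> r; rewrite !ffunE; case: (_ == _); last by rewrite scaler0.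
by rewrite -scalemxAr -scalemxAl.
Qed.

Lemma Lmap0 p p1 p2 p' Mu Mv : Lmap p p1 p2 p' Mu Mv 0 = 0.
Proof.
apply/ffunP=> r; rewrite !ffunE; case: (_ == _) => //.
by rewrite mulmx0 mul0mx.
Qed.

Definition Z (m : nat) (Y : V) := spanP (fun Y => exists l, (K + m <= l)%N /\ gen l Y) Y.

Lemma Z_step (K1 : (1 <= K)%N) m : (forall Y, Z m Y -> Z m.+1 Y) -> forall Y, Z m.+1 Y -> Z m.+2 Y.
Proof.
move=> h; apply: spanP_ind; first exact: spanP_sub.
move=> Y [l [hl gl]].
have [l' el] : exists l', l = l'.+1 by exists l.-1; lia.
subst l.
have [p [p1 [p2 [p' [Mu [Mv [Y' [iL gY' ->]]]]]]]] := decomp (l := l') ltac:(lia) ltac:(lia) gl.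
have zY' : Z m.+1 Y' by apply: h; apply: spanP_gen; exists l'; split => //; lia.
move: Y' zY' {gY'}; apply: spanP_ind.
  split; first by rewrite Lmap0; case: (spanP_sub (fun Y : V => exists l, (K + m.+2 <= l)%N /\ gen l Y)).
  split.
    move=> a b ha hb; rewrite LmapD; have [_ [hD _]] := spanP_sub (fun Y : V => exists l, (K + m.+2 <= l)%N /\ gen l Y).
    exact: hD.
  move=> k a ha; rewrite LmapZ; have [_ [_ hZ]] := spanP_sub (fun Y : V => exists l, (K + m.+2 <= l)%N /\ gen l Y).
  exact: hZ.
move=> Y0 [l0 [hl0 g0]].
case: (comp (l := l0) ltac:(lia) g0 iL) => [->|g1].
  by case: (spanP_sub (fun Y : V => exists l, (K + m.+2 <= l)%N /\ gen l Y)).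
by apply: spanP_gen; exists l0.+1; split => //; lia.
Qed.

End A7.

Lemma ex_min (P : nat -> Prop) n : P n -> exists k, P k /\ forall j, P j -> (k <= j)%N.
Proof.
suff H : forall N n, (n <= N)%N -> P n -> exists k, P k /\ forall j, P j -> (k <= j)%N.
  by apply: H (leqnn n).
elim=> [|N IH] m hm Pm.
  by exists m; split=> // j _; move: hm; rewrite leqn0 => /eqP ->.
case: (classic (exists j, (j < m)%N /\ P j)) => [[j [jm Pj]]|hn].
  by apply: (IH j) => //; lia.
exists m; split=> // j Pj; case: (leqP m j) => // jm.
by exfalso; apply: hn; exists j.
Qed.

Lemma annih (F : fieldType) (k : nat) (P : 'rV[F]_k -> Prop) (x : 'rV[F]_k) :
  subsp P -> ~ P x -> exists chi : 'cV[F]_k,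
    (forall x', P x' -> (x' *m chi) 0 0 = 0) /\ (x *m chi) 0 0 != 0.
Proof.
move=> sP nPx; have [U hU] := rep sP.
pose M := 1%:M - lin1_mx (projv U).
have fM : forall x' : 'rV[F]_k, x' *m M = x' - projv U x'.
  by move=> x'; rewrite mulmxBr mulmx1 mul_rV_lin1.
have nz : x - projv U x != 0.
  apply/negP; rewrite subr_eq0 => /eqP e; apply: nPx; apply/hU.
  by rewrite e memv_proj.
have [j hj] : exists j, (x - projv U x) 0 j != 0.
  case: (classic (exists j, (x - projv U x) 0 j != 0)) => // hn.
  exfalso; move/eqP: nz; apply.
  apply/rowP => j; rewrite [RHS]mxE.
  by case: (eqVneq ((x - projv U x) 0 j) 0) => // hj; exfalso; apply: hn; exists j.
exists (M *m delta_mx j 0); split.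
  move=> x' Px'; rewrite mulmxA -colE mxE fM.
  by rewrite projv_id ?subrr ?mxE //; apply/hU.
by rewrite mulmxA -colE mxE fM.
Qed.

Section A8.
Variables (F : fieldType) (S : finType) (A : wODCA F S).
Local Notation C := (cst A).
Local Notation n := (nQ A).
Local Notation run := (@run F S A).
Local Notation K := (bigK A).
Local Notation inW := (@inW F S A).
Local Notation bad := (@bad F S A).
Local Notation reach := (@reach F S A).
Local Notation is_dist := (@is_dist F S A).
Local Notation ctrl := (@ctrl F S A).
Local Notation mat := (@mat F S A).
Local Notation V := {ffun (C * C) -> 'M[F]_n}.
Local Notation Z := (@Z F S A).
Local Notation gen := (@gen F S A).

Definition tau (Y : V) : F := \sum_(p : C) \tr (Y (p, p)).

Lemma tauD (a b : V) : tau (a + b) = tau a + tau b.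
Proof. by rewrite /tau -big_split; apply: eq_bigr => p _; rewrite ffunE mxtraceD. Qed.

Lemma tauZ k (a : V) : tau (k *: a) = k * tau a.
Proof. by rewrite /tau mulr_sumr; apply: eq_bigr => p _; rewrite ffunE mxtraceZ. Qed.

Lemma tau_sub : subsp (fun Y : V => tau Y = 0).
Proof.
split; first by rewrite /tau big1 // => p _; rewrite ffunE mxtrace0.
split; first by move=> a b ha hb; rewrite tauD ha hb addr0.
by move=> k a ha; rewrite tauZ ha mulr0.
Qed.

Lemma tr_outer (x : 'rV[F]_n) (y : 'cV[F]_n) : \tr (x^T *m y^T) = (x *m y) 0 0.
Proof.
rewrite -trmx_mul mxtrace_tr mxtrace_mulC /mxtrace.
by rewrite big_ord1.
Qed.

Lemma tau_gen (x : 'rV[F]_n) (p1 p2 : C) (y : 'cV[F]_n) :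
  tau [ffun q => if q == (p1, p2) then x^T *m y^T else 0] =
  if p1 == p2 then (x *m y) 0 0 else 0.
Proof.
rewrite /tau; case: eqP => [<-|ne].
  rewrite (bigD1 p1) //= big1 ?addr0; first by rewrite ffunE eqxx tr_outer.
  move=> p hp; rewrite ffunE xpair_eqE (negbTE hp) /=.
  by rewrite mxtrace0.
rewrite big1 // => p _; rewrite ffunE xpair_eqE.
case: (p =P p1) => [->|] /=; last by rewrite mxtrace0.
by case: eqP => [e|]; [exfalso; apply: ne|rewrite mxtrace0].
Qed.

Lemma three_two (K1 : (1 <= K)%N) (d e : config A) :
  reach (init_config A) d -> reach d e -> (K ^ 2 + K <= d.2)%N ->
  (e.2 < K)%N -> ~ inW e.1.2 e.2 e.1.1 ->
  forall t : nat, exists d e : config A,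
      reach (init_config A) d /\ reach d e /\ (e.2 < K)%N /\ ~ inW e.1.2 e.2 e.1.1 /\
      exists k : nat, is_dist d k /\ (t < k)%N.
Proof.
move=> rd [w0 <-]; case: d rd => [[xd pd] N] rd /= hN.
rewrite run_lin /= => eK nW t.
have sW : subsp (inW (ctrl (pd, N) w0).1 (ctrl (pd, N) w0).2).
  split; first exact: inW0.
  split; [exact: inWD | move=> k u; exact: inWZ].
have [chi [hchi nzchi]] := annih sW nW.
pose Y0 : V := [ffun q => if q == (pd, pd) then xd^T *m (mat (pd, N) w0 *m chi)^T else 0].
have gY0 : gen N Y0 by exists xd, pd, pd, w0, chi; split.
have tY0 : tau Y0 != 0 by rewrite tau_gen eqxx mulmxA.
have zY0 : Z (N - K) Y0 by apply: spanP_gen; exists N; split => //; lia.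
have dimV : (\dim (fullv : {vspace V}) <= N - K)%N.
  rewrite dimvf /dim /= card_prod dim_matrix.
  have : (K ^ 2 <= N - K)%N by lia.
  apply: leq_trans; rewrite /bigK; apply: eq_leq.
  rewrite !expnMn /expn /=; lia.
have dZ : forall m Y, Z m.+1 Y -> Z m Y.
  move=> m Y hY; apply: (spanP_mono _ hY) => Y' [l [hl gl]]; exists l; split => //; lia.
have zt := @stab _ _ Z (fun m => spanP_sub _) dZ (Z_step K1) (N - K) t Y0 dimV zY0.
have [Y [[l [hl gl]] tY]] : exists Y, (exists l, (K + t <= l)%N /\ gen l Y) /\ tau Y != 0.
  case: (classic (exists Y, (exists l, (K + t <= l)%N /\ gen l Y) /\ tau Y != 0)) => // hn.
  exfalso; move/negP: tY0; apply; apply/eqP.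
  apply: (spanP_ind tau_sub _ zt) => Y gY.
  case: (classic (tau Y = 0)) => // hY; exfalso; apply: hn; exists Y; split => //.
  by apply/eqP.
case: gl => [x [p1 [p2 [w [ch [rx wK wch eY]]]]]].
move: tY; rewrite eY tau_gen.
case: (eqVneq p1 p2) => [ep|ne]; last by rewrite /= eqxx.
subst p2 => /= nz.
have bw : bad (run (x, p1, l) w).
  rewrite run_lin; split => //= hW.
  by move: nz; rewrite mulmxA (wch _ hW) eqxx.
have [k [[w1 [sw1 bw1]] kmin]] := ex_min (P := fun j => exists w, size w = j /\ bad (run (x, p1, l) w)) (ex_intro _ w (conj (erefl _) bw)).
exists (x, p1, l), (run (x, p1, l) w1).
split => //; split; first by exists w1.
case: bw1 => b1 b2; split => //; split => //.
exists k; split.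
  split; first by exists w1.
  by move=> w2 bw2; apply: kmin; exists w2.
have := ctrl_lb (p1, l) w1; move: b1; rewrite run_lin /=; lia.
Qed.

End A8.

Unset Implicit Arguments.
Set Strict Implicit. Set Printing Implicit Defensive.
Theorem mainTheorem6 (F : fieldType) (S : finType) (A : wODCA F S)
  (hQ : (0 < nQ A)%N) :
  let c := init_config A in
  let K := bigK A in
  (~ regular A <->
   (forall t : nat, exists d e : config A,
      reach c d /\ reach d e /\ (e.2 < K)%N /\ ~ inW e.1.2 e.2 e.1.1 /\
      exists k : nat, is_dist d k /\ (t < k)%N)) /\
  (~ regular A <->
   (exists d e : config A,
      reach c d /\ reach d e /\
      (K ^ 2 + K <= d.2 <= 2 * K ^ 2 + K)%N /\
      (e.2 < K)%N /\ ~ inW e.1.2 e.2 e.1.1)).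
Proof.
move=> c K.
have K1 : (1 <= bigK A)%N.
  have : (0 < #|{: cst A}|)%N by apply/card_gt0P; exists (p0 A).
  rewrite /bigK; move: hQ; clear; nia.
have mkdist : forall (d : config A) w, bad (run d w) ->
    exists k, is_dist d k /\ (d.2 < k + bigK A)%N /\
      exists w1, size w1 = k /\ bad (run d w1).
  move=> d w bw.
  have [k [[w1 [sw1 bw1]] kmin]] := ex_min (P := fun j => exists w, size w = j /\ bad (run d w)) (ex_intro _ w (conj (erefl _) bw)).
  exists k; split; last split.
  - split; first by exists w1.
    by move=> w2 bw2; apply: kmin; exists w2.
  - case: bw1 => b1 _; move: b1 {bw kmin}; case: d => [[x p] m] /=.
    rewrite run_lin /= => b1; have := ctrl_lb (p, m) w1; rewrite /=; lia.
  - by exists w1.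
split; split.
- move=> nreg; apply: NNPP => n2; apply: nreg.
  have [t ht] := not_all_ex_not _ _ n2.
  have KT : (bigK A <= t + bigK A)%N by lia.
  have T1 : (0 < t + bigK A)%N by lia.
  apply: (@construct F S A (t + bigK A) KT T1) => d rd dT w bw.
  apply: ht; have [k [dk [dlt [w1 [sw1 bw1]]]]] := mkdist d w bw.
  exists d, (run d w1); split => //; split; first by exists w1.
  case: bw1 => b1 b2; split => //; split => //.
  by exists k; split => //; lia.
- by move=> h2 reg; apply: (reg_nodist reg).
- move=> nreg; apply: NNPP => n3; apply: nreg.
  have KT : (bigK A <= bigK A ^ 2 + bigK A)%N by lia.
  have T1 : (0 < bigK A ^ 2 + bigK A)%N by lia.
  apply: (@construct F S A (bigK A ^ 2 + bigK A) KT T1) => d rd dT w bw.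
  apply: n3; exists d, (run d w); split => //; split; first by exists w.
  case: bw => b1 b2; split; first by rewrite dT; lia.
  by split.
- move=> [d [e [rd [rde [hd [he nW]]]]]] reg.
  apply: (reg_nodist reg).
  apply: (three_two K1 rd rde) => //.
  by case/andP: hd.
Qed.
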